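(* Let $A,B\in\mathbb R^{\mathcal N\times\mathcal N}$ with $A$ invertible, and assume that among the generalized eigenvalues $\lambda\in\mathbb C$ of $Av=\lambda Bv$ there is a unique positive one $\lambda>0$ of smallest modulus, and that it is simple. Let $u,u^*$, $k$, $M$, $\tilde u^*$, $P$, $P^*$ and the pseudo-inverses be as in the context. Let $u_N,u_N^*\in\mathbb R^{\mathcal N}$ with $\langle u_N^*,Au_N\rangle\ne0$, let $k_N:=\frac{\langle u_N^*,Bu_N\rangle}{\langle u_N^*,Au_N\rangle}$ satisfy $k_N\notin\sigma\big((PMP)|_{[\operatorname{Span}\{\tilde u^*\}]^\perp}\big)$ and $k_N\notin\sigma\big((P^*M^TP^* )|_{[\operatorname{Span}\{u\}]^\perp}\big)$, and let $$C_N^k:=\Big\|\big[P^*(P^*M^TP^*-k_NI)^+P^*\big]^T(M-kI)P(PMP-k_NI)^+PA^{-1}\Big\|.$$ Then $$C_N^k\le\frac{\|M-kI\|\,\|PA^{-1}\|}{\operatorname{dist}\big(k_N,\operatorname{Num}((PMP)|_{[\operatorname{Span}\{\tilde u^*\}]^\perp})\big)\;\operatorname{dist}\big(k_N,\operatorname{Num}((P^*M^TP^* )|_{[\operatorname{Span}\{u\}]^\perp})\big)},$$ where the right-hand side is read as $+\infty$ if one of the distances vanishes.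
   Context: $\mathbb R^{\mathcal N}$ carries the Euclidean inner product $\langle\cdot,\cdot\rangle$ and norm; matrix norms are induced operator norms. ''Simple'' means $k=1/\lambda$ is an algebraically simple eigenvalue of $M=A^{-1}B$. $u,u^*$ are unit vectors with $Au=\lambda Bu$, $A^Tu^*=\lambda B^Tu^*$; $\tilde u^*=A^Tu^*/\|A^Tu^*\|$; $P=I-\frac{u(\tilde u^* )^T}{\langle u,\tilde u^*\rangle}$, $P^*=I-\frac{\tilde u^*u^T}{\langle u,\tilde u^*\rangle}$ (here $\langle u,\tilde u^*\rangle\ne0$). $(PMP-k_NI)^+$ is the inverse of $(PMP-k_NI)|_{[\operatorname{Span}\{\tilde u^*\}]^\perp}$ on $[\operatorname{Span}\{\tilde u^*\}]^\perp$ and $0$ on $\operatorname{Span}\{u\}$; $(P^*M^TP^*-k_NI)^+$ is the inverse of $(P^*M^TP^*-k_NI)|_{[\operatorname{Span}\{u\}]^\perp}$ on $[\operatorname{Span}\{u\}]^\perp$ and $0$ on $\operatorname{Span}\{\tilde u^*\}$. For a linear map $Q$ of a subspace $W$ into itself, the numerical range is $\operatorname{Num}(Q)=\overline{\{\langle v,Qv\rangle: v\in W,\ \|v\|=1\}}$. *)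

(* Defs.v *)
From HB Require Import structures.
From mathcomp Require Import all_boot all_order all_algebra.
From mathcomp Require Import all_classical all_reals all_analysis.
From mathcomp Require Import complex.

Set Implicit Arguments.
Unset Strict Implicit.
Unset Printing Implicit Defensive.

Import Order.TTheory GRing.Theory Num.Theory.
Local Open Scope ring_scope.
Local Open Scope classical_set_scope.
Import numFieldNormedType.Exports.

Section Defs.
Variables (R : realType) (n : nat).

Definition dotv (x y : 'cV[R]_n) : R := \sum_(i < n) x i 0 * y i 0.

Definition vnorm (x : 'cV[R]_n) : R := Num.sqrt (dotv x x).

Definition opnorm (X : 'M[R]_n) : R :=
  sup [set vnorm (X *m x) | x in [set x : 'cV[R]_n | vnorm x = 1]].

Definition gen_eigenvalue (A B : 'M[R]_n) (l : R[i]) : Prop :=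
  exists v : 'cV[R[i]]_n, v != 0 /\
    map_mx (fun x : R => (x%:C)%C) A *m v
      = l *: (map_mx (fun x : R => (x%:C)%C) B *m v).

Definition perp (w : 'cV[R]_n) : set 'cV[R]_n := [set x | dotv x w = 0].

Definition in_spectrum_restr (Q : 'M[R]_n) (w : 'cV[R]_n) (k : R) : Prop :=
  exists x : 'cV[R]_n, x != 0 /\ perp w x /\ Q *m x = k *: x.

(* X = (Q - k I)^+ : inverse of (Q - k I)|_W on W = [Span{w}]^perp,
   and 0 on Span{c}. *)
Definition is_pinv (Q : 'M[R]_n) (k : R) (w c : 'cV[R]_n) (X : 'M[R]_n) : Prop :=
  (forall x, perp w x ->
     [/\ perp w (X *m x),
         X *m ((Q - k%:M) *m x) = x &
         (Q - k%:M) *m (X *m x) = x])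
  /\ X *m c = 0.

Definition num_range (Q : 'M[R]_n) (w : 'cV[R]_n) : set R :=
  @closure (Real.sort R : topologicalType) [set dotv x (Q *m x) | x in [set x | perp w x /\ vnorm x = 1]].

Definition dist_set (k : R) (S : set R) : R := inf [set `|k - s| | s in S].

End Defs.

(* Main.v *)
Require Import Defs.
From HB Require Import structures.
From mathcomp Require Import all_boot all_order all_algebra.
From mathcomp Require Import all_classical all_reals all_analysis.
From mathcomp Require Import complex.
From mathcomp Require Import ring lra.

Import Order.TTheory GRing.Theory Num.Theory.
Local Open Scope ring_scope.

Section Aux.
Context {R : realType} {n : nat}.
Implicit Types (x y z : 'cV[R]_n) (X : 'M[R]_n).

Lemma dotE x y : dotv x y = (x^T *m y) 0 0.
Proof. by rewrite /dotv !mxE; apply: eq_bigr => i _; rewrite mxE. Qed.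

Lemma dotC x y : dotv x y = dotv y x.
Proof. by apply: eq_bigr => i _; rewrite mulrC. Qed.

Lemma dotDl x y z : dotv (x + y) z = dotv x z + dotv y z.
Proof. by rewrite /dotv -big_split; apply: eq_bigr => i _; rewrite mxE mulrDl. Qed.

Lemma dotNl x z : dotv (- x) z = - dotv x z.
Proof. by rewrite /dotv -sumrN; apply: eq_bigr => i _; rewrite mxE mulNr. Qed.

Lemma dotBl x y z : dotv (x - y) z = dotv x z - dotv y z.
Proof. by rewrite dotDl dotNl. Qed.

Lemma dotZl a x z : dotv (a *: x) z = a * dotv x z.
Proof. by rewrite /dotv mulr_sumr; apply: eq_bigr => i _; rewrite mxE mulrA. Qed.

Lemma dotDr x y z : dotv z (x + y) = dotv z x + dotv z y.
Proof. by rewrite !(dotC z) dotDl. Qed.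
Lemma dotBr x y z : dotv z (x - y) = dotv z x - dotv z y.
Proof. by rewrite !(dotC z) dotBl. Qed.
Lemma dotZr a x z : dotv z (a *: x) = a * dotv z x.
Proof. by rewrite !(dotC z) dotZl. Qed.

Lemma dot_mul x X y : dotv x (X *m y) = dotv (X^T *m x) y.
Proof. by rewrite !dotE trmx_mul trmxK mulmxA. Qed.

Lemma dot_ge0 x : 0 <= dotv x x.
Proof. by apply: sumr_ge0 => i _; rewrite -expr2 sqr_ge0. Qed.

Lemma vnorm_ge0 x : 0 <= vnorm x.
Proof. exact: sqrtr_ge0. Qed.

Lemma vnorm_sq x : vnorm x ^+ 2 = dotv x x.
Proof. by rewrite /vnorm sqr_sqrtr // dot_ge0. Qed.

Lemma vnormZ a x : vnorm (a *: x) = `|a| * vnorm x.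
Proof. by rewrite /vnorm dotZl dotZr mulrA sqrtrM ?sqrtr_sqr // -expr2 sqr_ge0. Qed.

Lemma CS x y : `|dotv x y| <= vnorm x * vnorm y.
Proof.
have [x0|xpos] := eqVneq (dotv x x) 0.
  have h : dotv x y = 0.
    have key : forall t : R, 0 <= dotv (y - t *: x) (y - t *: x).
      by move=> t; apply: dot_ge0.
    have E t : dotv (y - t *: x) (y - t *: x) = dotv y y - 2 * t * dotv x y.
      rewrite !dotBl !dotBr !dotZl !dotZr x0 (dotC y x); ring.
    apply/eqP; apply: contraT => nz.
    have := key ((dotv y y + 1) / (2 * dotv x y)); rewrite E.
    have -> : dotv y y - 2 * ((dotv y y + 1) / (2 * dotv x y)) * dotv x y = -1.
      by field.
    by move=> h; lra.

  by rewrite h normr0 mulr_ge0 ?vnorm_ge0.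
set a := dotv x y; set b := dotv x x.
have bpos : 0 < b by rewrite lt_def xpos dot_ge0.
have H : 0 <= dotv (b *: y - a *: x) (b *: y - a *: x) by apply: dot_ge0.
have E : dotv (b *: y - a *: x) (b *: y - a *: x) = b * (b * dotv y y - a ^+ 2).
  rewrite !dotBl !dotBr !dotZl !dotZr -/a -/b (dotC y x) -/a; ring.
rewrite E pmulr_rge0 // subr_ge0 in H.
rewrite /vnorm -/b -sqrtrM ?dot_ge0 // -sqrtr_sqr ler_sqrt ?mulr_ge0 ?dot_ge0 //.
Qed.


Lemma commBB (T : 'M[R]_n) (a b : R) :
  (T - a%:M) *m (T - b%:M) = (T - b%:M) *m (T - a%:M).
Proof.
rewrite !mulmxBl !mulmxBr !mul_mx_scalar !mul_scalar_mx !scale_scalar_mx mulrC.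
rewrite !opprB !addrA [LHS]addrAC [RHS]addrAC; congr (_ + _).
by rewrite addrAC.
Qed.

Lemma trmul1 (q x : 'cV[R]_n) : q^T *m x = (dotv q x)%:M.
Proof. by apply/matrixP => i j; rewrite !ord1 dotE [in RHS]mxE eqxx mulr1n. Qed.

Lemma proj_apply (p q : 'cV[R]_n) (c : R) x :
  (1%:M - c^-1 *: (p *m q^T)) *m x = x - (c^-1 * dotv q x) *: p.
Proof.
by rewrite mulmxBl mul1mx -scalemxAl -mulmxA trmul1 mul_mx_scalar scalerA mulrC.
Qed.

Lemma proj_perp (p q : 'cV[R]_n) (c : R) x : c = dotv q p -> c != 0 ->
  dotv ((1%:M - c^-1 *: (p *m q^T)) *m x) q = 0.
Proof.
move=> hc nz; rewrite proj_apply dotBl dotZl (dotC x q) (dotC p q) -hc.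
by rewrite mulrAC mulVf // mul1r subrr.
Qed.

Lemma proj_fix (p q : 'cV[R]_n) (c : R) x : dotv x q = 0 ->
  (1%:M - c^-1 *: (p *m q^T)) *m x = x.
Proof. by move=> hx; rewrite proj_apply dotC hx mulr0 scale0r subr0. Qed.


Lemma coord_le1 x (j : 'I_n) : vnorm x = 1 -> `|x j 0| <= 1.
Proof.
move=> h1; have : x j 0 ^+ 2 <= 1.
  rewrite -(expr1n R 2) -h1 vnorm_sq /dotv (bigD1 j) //= -expr2 lerDl.
  by apply: sumr_ge0 => i _; rewrite -expr2 sqr_ge0.
by move=> h; rewrite -sqrtr_sqr -sqrtr1 ler_sqrt.
Qed.

Definition bnd X : R := Num.sqrt (\sum_(i < n) (\sum_(j < n) `|X i j|) ^+ 2).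

Lemma unit_bound X x : vnorm x = 1 -> vnorm (X *m x) <= bnd X.
Proof.
move=> h1; rewrite /vnorm /bnd ler_sqrt; last first.
  by apply: sumr_ge0 => i _; rewrite sqr_ge0.
apply: ler_sum => i _; rewrite -expr2.
have hb : `|(X *m x) i 0| <= \sum_(j < n) `|X i j|.
  rewrite mxE; apply: le_trans (ler_norm_sum _ _ _) _.
  apply: ler_sum => j _; rewrite normrM; apply: ler_piMr => //.
  exact: coord_le1.
rewrite -real_normK ?num_real //.
by apply: lerXn2r; rewrite ?nnegrE ?normr_ge0 ?sumr_ge0.
Qed.

Definition oset X := ([set vnorm (X *m x) | x in [set x : 'cV[R]_n | vnorm x = 1]])%classic.

Lemma oset_has_sup X : (oset X !=set0)%classic -> has_sup (oset X).
Proof.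
move=> ne; split => //; exists (bnd X) => _ [x hx <-]; exact: unit_bound.
Qed.

Lemma opnorm_ge0 X : 0 <= opnorm X.
Proof.
rewrite /opnorm -/(oset X).
have [->|ne] := eqVneq (oset X) set0; first by rewrite sup0.
have /set0P ne' := ne.
have [e he] := ne'.
apply: (le_trans _ (sup_upper_bound (oset_has_sup _ ne') he)).
by case: he => x _ <-; apply: vnorm_ge0.
Qed.

Lemma vnorm0 x : vnorm x = 0 -> forall X, vnorm (X *m x) = 0.
Proof.
move=> h0 X; apply/eqP; rewrite eq_le vnorm_ge0 andbT.
rewrite -(@ler_pXn2r _ 2) // ?nnegrE ?vnorm_ge0 //.
rewrite expr0n /= vnorm_sq dot_mul (dotC _ x).
apply: le_trans (ler_norm _) _; apply: le_trans (CS _ _) _.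
by rewrite h0 mul0r.
Qed.

Lemma opnorm_ub X x : vnorm (X *m x) <= opnorm X * vnorm x.
Proof.
have [h0|hp] := eqVneq (vnorm x) 0.
  by rewrite h0 mulr0 vnorm0.
have vp : 0 < vnorm x by rewrite lt_def hp vnorm_ge0.
set xn := (vnorm x)^-1 *: x.
have hxn : vnorm xn = 1.
  by rewrite vnormZ ger0_norm ?invr_ge0 ?vnorm_ge0 // mulVf.
have hin : oset X (vnorm (X *m xn)) by exists xn.
have := sup_upper_bound (oset_has_sup _ (ex_intro _ _ hin)) hin.
rewrite -scalemxAr vnormZ ger0_norm ?invr_ge0 ?vnorm_ge0 //.
by move=> /(ler_wpM2r (vnorm_ge0 x)); rewrite mulrAC mulVf // mul1r.
Qed.

Lemma opnorm_le X b : 0 <= b ->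
  (forall x, vnorm x = 1 -> vnorm (X *m x) <= b) -> opnorm X <= b.
Proof.
move=> b0 hb; rewrite /opnorm -/(oset X).
have [->|ne] := eqVneq (oset X) set0; first by rewrite sup0.
have /set0P ne' := ne.
by apply: ge_sup => // _ [x hx <-]; apply: hb.
Qed.

Lemma opnorm_tr X : opnorm X^T <= opnorm X.
Proof.
apply: opnorm_le; first exact: opnorm_ge0.
move=> x hx; set v := X^T *m x.
have [h0|hp] := eqVneq (vnorm v) 0; first by rewrite h0 opnorm_ge0.
have vp : 0 < vnorm v by rewrite lt_def hp vnorm_ge0.
have : vnorm v ^+ 2 <= opnorm X * vnorm v.
  rewrite vnorm_sq {1}/v -dot_mul.
  apply: le_trans (ler_norm _) _; apply: le_trans (CS _ _) _.
  by rewrite hx mul1r opnorm_ub.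
by rewrite expr2 ler_pM2r.
Qed.


Lemma pinv_bound (Q : 'M[R]_n) (kN : R) (w c : 'cV[R]_n) (Xp : 'M[R]_n) x :
  is_pinv Q kN w c Xp -> perp w x ->
  dist_set kN (num_range Q w) * vnorm (Xp *m x) <= vnorm x.
Proof.
move=> [hP _] hx; have [hy _ h2] := hP x hx.
set y := Xp *m x in hy h2 *.
have [h0|hp] := eqVneq (vnorm y) 0; first by rewrite h0 mulr0 vnorm_ge0.
have vp : 0 < vnorm y by rewrite lt_def hp vnorm_ge0.
set yn := (vnorm y)^-1 *: y.
set e := dotv yn (Q *m yn).
have hyn : vnorm yn = 1.
  by rewrite vnormZ ger0_norm ?invr_ge0 ?vnorm_ge0 // mulVf.
have hpyn : perp w yn by rewrite /perp /= dotZl hy mulr0.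
have hnr : num_range Q w e.
  by apply: subset_closure; exists yn.
have hd : dist_set kN (num_range Q w) <= `|kN - e|.
  rewrite /dist_set; apply: ge_inf; last by exists e.
  by exists 0 => _ [s _ <-]; apply: normr_ge0.
have key : `|kN - e| * vnorm y ^+ 2 = `|dotv y x|.
  rewrite -h2 mulmxBl mul_scalar_mx dotBr dotZr.
  rewrite -[vnorm y ^+ 2]ger0_norm ?sqr_ge0 // -normrM -normrN; congr `|_|.
  rewrite /e /yn -scalemxAr dotZl dotZr -vnorm_sq; field; exact: hp.
have : dist_set kN (num_range Q w) * vnorm y ^+ 2 <= vnorm y * vnorm x.
  apply: le_trans (CS _ _); rewrite -key; apply: ler_wpM2r => //.
  exact: sqr_ge0.
by rewrite expr2 mulrA [vnorm y * vnorm x]mulrC ler_pM2r.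
Qed.

End Aux.

Theorem proposition4 (R : realType) (N : nat)
  (A B : 'M[R]_N) (lambda : R) (u us uN usN : 'cV[R]_N)
  (Xp Xs : 'M[R]_N) :
  A \in unitmx ->
  (* lambda > 0 is a generalized eigenvalue, the unique one of smallest modulus *)
  0 < lambda ->
  gen_eigenvalue A B (lambda%:C)%C ->
  (forall mu : R[i], gen_eigenvalue A B mu -> mu != (lambda%:C)%C ->
     (lambda%:C)%C < `|mu|) ->
  let k := lambda^-1 in
  let M := invmx A *m B in
  (* k is an algebraically simple eigenvalue of M *)
  mup k (char_poly M) = 1%N ->
  vnorm u = 1 -> vnorm us = 1 ->
  A *m u = lambda *: (B *m u) ->
  A^T *m us = lambda *: (B^T *m us) ->
  let ust := (vnorm (A^T *m us))^-1 *: (A^T *m us) in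
  dotv u ust != 0 ->
  let P := 1%:M - (dotv u ust)^-1 *: (u *m ust^T) in
  let Ps := 1%:M - (dotv u ust)^-1 *: (ust *m u^T) in
  dotv usN (A *m uN) != 0 ->
  let kN := dotv usN (B *m uN) / dotv usN (A *m uN) in
  ~ in_spectrum_restr (P *m M *m P) ust kN ->
  ~ in_spectrum_restr (Ps *m M^T *m Ps) u kN ->
  is_pinv (P *m M *m P) kN ust u Xp ->
  is_pinv (Ps *m M^T *m Ps) kN u ust Xs ->
  let CNk := opnorm ((Ps *m Xs *m Ps)^T *m (M - k%:M) *m P *m Xp *m P *m invmx A) in
  let d1 := dist_set kN (num_range (P *m M *m P) ust) in
  let d2 := dist_set kN (num_range (Ps *m M^T *m Ps) u) in
  (* the right-hand side is +oo when d1 = 0 or d2 = 0 *)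
  0 < d1 -> 0 < d2 ->
  CNk <= opnorm (M - k%:M) * opnorm (P *m invmx A) / (d1 * d2).
Proof.
move=> hA hl _ _ k M _ _ _ hu hus ust hc P Ps _ kN _ _ hXp hXs CNk d1 d2 hd1 hd2.
have lam0 : lambda != 0 by rewrite gt_eqF.
have Mu : M *m u = k *: u.
  rewrite /M -mulmxA.
  have -> : B *m u = lambda^-1 *: (A *m u) by rewrite hu scalerA mulVf // scale1r.
  by rewrite -scalemxAr mulKmx.
have MTa : M^T *m (A^T *m us) = k *: (A^T *m us).
  rewrite /M trmx_mul -mulmxA (mulmxA (invmx A)^T) -trmx_mul mulmxV // trmx1 mul1mx.
  by rewrite hus scalerA mulVf // scale1r.
have MTust : M^T *m ust = k *: ust by rewrite /ust -scalemxAr MTa !scalerA mulrC.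
have hPperp x : perp ust (P *m x) by exact: (proj_perp u ust (dotv u ust) x (dotC u ust) hc).
have hPfix x : perp ust x -> P *m x = x by apply: proj_fix.
have hPsperp x : perp u (Ps *m x) by exact: (proj_perp ust u (dotv u ust) x (erefl _) hc).
have hPsfix x : perp u x -> Ps *m x = x by apply: proj_fix.
have MkT : (M - k%:M)^T = M^T - k%:M by rewrite linearB /= tr_scalar_mx.
have hTperp y : dotv y u = 0 -> dotv (M^T *m y) u = 0.
  by move=> hy; rewrite dotC dot_mul trmxK Mu dotZl dotC hy mulr0.
have hQ y : perp u y -> (Ps *m M^T *m Ps - kN%:M) *m y = (M^T - kN%:M) *m y.
  move=> hy; have e : (Ps *m M^T *m Ps) *m y = M^T *m y.
    by rewrite -!mulmxA (hPsfix y hy) (hPsfix _ (hTperp y hy)).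
  by rewrite mulmxBl e -mulmxBl.
have LF z : d2 * vnorm ((Ps *m Xs *m Ps)^T *m ((M - k%:M) *m z))
            <= opnorm (M - k%:M) * vnorm z.
  set v := (Ps *m Xs *m Ps)^T *m ((M - k%:M) *m z).
  have [h0|hp] := eqVneq (vnorm v) 0.
    by rewrite h0 mulr0 mulr_ge0 ?opnorm_ge0 ?vnorm_ge0.
  have vp : 0 < vnorm v by rewrite lt_def hp vnorm_ge0.
  set a := Xs *m (Ps *m v).
  have [pa _ ha] := hXs.1 _ (hPsperp v).
  rewrite -/a in pa ha.
  set g := (M^T - k%:M) *m a.
  have pg : perp u g.
    by rewrite /perp /= /g mulmxBl mul_scalar_mx dotBl dotZl (hTperp a pa) pa mulr0 subr0.
  have hgv : (M^T - kN%:M) *m g = (M^T - k%:M) *m v.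
    rewrite /g mulmxA commBB -mulmxA -(hQ a pa) ha.
    rewrite /Ps proj_apply mulmxBr -scalemxAr [(M^T - k%:M) *m ust]mulmxBl MTust mul_scalar_mx subrr.
    by rewrite scaler0 subr0.
  have pTv : perp u ((M^T - k%:M) *m v).
    rewrite -hgv /perp /= mulmxBl mul_scalar_mx dotBl dotZl (hTperp g pg).
    by have := pg; rewrite /perp /= => ->; rewrite mulr0 subr0.
  have g_eq : g = Xs *m ((M^T - k%:M) *m v).
    have [_ h2' _] := hXs.1 g pg.
    by rewrite (hQ g pg) hgv in h2'; rewrite h2'.
  have hg : d2 * vnorm g <= vnorm ((M^T - k%:M) *m v).
    by rewrite g_eq; apply: pinv_bound hXs pTv.
  have hTv : vnorm ((M^T - k%:M) *m v) <= opnorm (M - k%:M) * vnorm v.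
    rewrite -MkT; apply: le_trans (opnorm_ub _ _) _.
    apply: ler_wpM2r; [exact: vnorm_ge0 | exact: opnorm_tr].
  have hvv : vnorm v ^+ 2 <= vnorm g * vnorm z.
    rewrite vnorm_sq {2}/v dot_mul trmxK dot_mul MkT -!mulmxA -/a (hPsfix a pa) -/g.
    exact: le_trans (ler_norm _) (CS _ _).
  have : d2 * vnorm v * vnorm v <= opnorm (M - k%:M) * vnorm z * vnorm v.
    apply: (le_trans (y := d2 * (vnorm g * vnorm z))).
      rewrite -mulrA -expr2; apply: ler_wpM2l; [exact: ltW | exact: hvv].
    rewrite mulrA; apply: (le_trans (y := opnorm (M - k%:M) * vnorm v * vnorm z)).
      apply: ler_wpM2r; [exact: vnorm_ge0 | exact: le_trans hg hTv].
    by rewrite mulrAC.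
  by rewrite ler_pM2r.
apply: opnorm_le.
  apply: divr_ge0; first exact: (mulr_ge0 (opnorm_ge0 _) (opnorm_ge0 _)).
  exact: (mulr_ge0 (ltW hd1) (ltW hd2)).
move=> x hx1; rewrite -!mulmxA.
set w1 := P *m (invmx A *m x).
have hw1 : vnorm w1 <= opnorm (P *m invmx A).
  by have := opnorm_ub (P *m invmx A) x; rewrite hx1 mulr1 -mulmxA.
have pw1 : perp ust w1 by apply: hPperp.
set b := Xp *m w1.
have hb : d1 * vnorm b <= vnorm w1 by apply: pinv_bound hXp pw1.
have [pb _ _] := hXp.1 w1 pw1.
rewrite -/b in pb; rewrite (hPfix b pb).
have h2 := LF b.
have b0 := vnorm_ge0 b.
have m0 := opnorm_ge0 (M - k%:M).
have p0 := opnorm_ge0 (P *m invmx A).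
rewrite ler_pdivlMr ?mulr_gt0 //.
rewrite [d1 * d2]mulrC mulrA [vnorm _ * d2]mulrC.
apply: (le_trans (y := opnorm (M - k%:M) * vnorm b * d1)).
  apply: ler_wpM2r; [exact: ltW hd1 | rewrite [Ps *m (Xs *m Ps)]mulmxA; exact: h2].
rewrite -mulrA (mulrC _ d1); apply: ler_wpM2l; [exact: m0 | exact: le_trans hb hw1].
Qed.
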